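(* Let $n,m$ be positive integers with $m+2\le n$ and let $H$ be a graph. Then $$\gamma_{gr}(P_n^m\circ H)=\begin{cases}\left\lceil \frac{n}{m+1}\right\rceil (\gamma_{gr} (H)-(m+1))+n+m & \text{if } \gamma_{gr}(H)\geq m+1,\\ 2\gamma_{gr}(H)+n-m-2 & \text{if } \gamma_{gr}(H)\leq m.\end{cases}$$
   Context: $P_n^m$ has vertex set $[n]$, distinct $i,j$ adjacent iff $|i-j|\le m$. The lexicographic product $G\circ H$ has vertex set $V(G)\times V(H)$, with $(g_1,h_1)$ adjacent to $(g_2,h_2)$ iff $g_1g_2\in E(G)$, or $g_1=g_2$ and $h_1h_2\in E(H)$. $\gamma_{gr}$ is the Grundy domination number: the maximum length of a sequence $(v_1,\dots,v_k)$ of distinct vertices whose set is dominating and such that each $N[v_i]\setminus\bigcup_{j<i}N[v_j]$ is non-empty ($N[\cdot]$ the closed neighborhood). *)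

(* Defs.v *)
From mathcomp Require Import all_boot.
Set Implicit Arguments. Unset Strict Implicit. Unset Printing Implicit Defensive.

(* A finite simple graph is a vertex finType T with an adjacency relation
   e : rel T that is symmetric and irreflexive. *)

Definition cnbh (T : finType) (e : rel T) (v : T) : {set T} :=
  [set u | (u == v) || e v u].

Fixpoint legal_from (T : finType) (e : rel T) (covered : {set T}) (s : seq T)
  : bool :=
  match s with
  | [::] => true
  | v :: s' => ~~ (cnbh e v \subset covered)
               && legal_from e (covered :|: cnbh e v) s'
  end.

Definition dominating_seq (T : finType) (e : rel T) (s : seq T) : bool :=
  \bigcup_(v <- s) cnbh e v == [set: T].

Definition is_gds (T : finType) (e : rel T) (s : seq T) : bool :=
  [&& uniq s, dominating_seq e s & legal_from e set0 s].

(* Grundy domination number: maximum length of a Grundy dominating sequence.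
   Such sequences are duplicate-free, so their length is at most #|T|. *)
Definition gamma_gr (T : finType) (e : rel T) : nat :=
  \max_(k < #|T|.+1 | [exists t : k.-tuple T, is_gds e t]) k.

Definition lexprod (T1 T2 : finType) (e1 : rel T1) (e2 : rel T2) : rel (T1 * T2) :=
  fun x y => e1 x.1 y.1 || ((x.1 == y.1) && e2 x.2 y.2).

(* P_n^m on vertex set 'I_n (i.e. {0,...,n-1}, a shift of [n]):
   distinct i, j adjacent iff |i - j| <= m. *)
Definition path_pow (n m : nat) : rel 'I_n :=
  fun i j => (i != j) && (i - j <= m) && (j - i <= m).

Definition ceildiv (a b : nat) : nat := (a + b.-1) %/ b.
Arguments path_pow : clear implicits.

(* Main.v *)
Require Import Defs.
From mathcomp Require Import all_boot zify.
Set Implicit Arguments. Unset Strict Implicit. Unset Printing Implicit Defensive.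


Section General.
Variables (T : finType) (e : rel T).

Definition gcover (s : seq T) : {set T} := \bigcup_(v <- s) cnbh e v.

Lemma cover_nil : gcover [::] = set0.
Proof. by rewrite /gcover big_nil. Qed.

Lemma cover_cons v s : gcover (v :: s) = cnbh e v :|: gcover s.
Proof. by rewrite /gcover big_cons. Qed.

Lemma cover_cat s1 s2 : gcover (s1 ++ s2) = gcover s1 :|: gcover s2.
Proof. by rewrite /gcover big_cat. Qed.

Lemma coverP w s : reflect (exists2 v, v \in s & w \in cnbh e v) (w \in gcover s).
Proof.
elim: s => [|v s IH]; first by rewrite cover_nil in_set0; constructor; case.
rewrite cover_cons in_setU; apply: (iffP orP).
  case=> [H|/IH [u Hu Hw]]; first by exists v; rewrite ?mem_head.
  by exists u; rewrite // in_cons Hu orbT.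
case=> u; rewrite in_cons => /orP [/eqP->|Hu] Hw; first by left.
by right; apply/IH; exists u.
Qed.

Lemma legal_cat (C : {set T}) s1 s2 :
  legal_from e C (s1 ++ s2) = legal_from e C s1 && legal_from e (C :|: gcover s1) s2.
Proof.
elim: s1 C => [|v s IH] C /=; first by rewrite cover_nil setU0.
by rewrite IH cover_cons setUA andbA.
Qed.

Lemma legal_mono (C C' : {set T}) s : C \subset C' -> legal_from e C' s -> legal_from e C s.
Proof.
elim: s C C' => [|v s IH] C C' //= HC /andP [H1 H2]; apply/andP; split.
  by apply: contra H1 => H; apply: subset_trans H HC.
by apply: IH H2; apply: setSU.
Qed.

Lemma legal_mem (C : {set T}) s w : legal_from e C s -> w \in s -> ~~ (cnbh e w \subset C).
Proof.
elim: s C => [|v s IH] C //= /andP [H1 H2]; rewrite in_cons => /orP [/eqP->//|Hw].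
have := IH _ H2 Hw; apply: contra => H; apply: subset_trans H _; exact: subsetUl.
Qed.

Lemma legal_uniq (C : {set T}) s : legal_from e C s -> uniq s.
Proof.
elim: s C => [|v s IH] C //= /andP [H1 H2]; rewrite (IH _ H2) andbT.
apply/negP => Hv; have := legal_mem H2 Hv; by rewrite subsetUr.
Qed.

Lemma extend (C : {set T}) : exists s, legal_from e C s && (C :|: gcover s == setT).
Proof.
move: {2}#|~: C| (leqnn #|~: C|) => k; elim: k C => [|k IH] C Hk.
  exists [::]; rewrite /= cover_nil setU0; apply/eqP.
  by move: Hk; rewrite leqn0 cards_eq0 => /eqP H; rewrite -(setCK C) H setC0.
case: (boolP (C == setT)) => [/eqP->|HC].
  by exists [::]; rewrite /= cover_nil setU0.
have [u Hu] : exists u, u \notin C.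
  apply/existsP; move: HC; apply: contraR; rewrite negb_exists => /forallP H.
  apply/eqP/setP => x; rewrite in_setT; by have := H x; rewrite negbK.
have Hk' : #|~: (C :|: cnbh e u)| <= k.
  rewrite -ltnS; apply: leq_trans Hk; apply: proper_card.
  rewrite setCU; apply/properP; split; first exact: subsetIl.
  exists u; rewrite ?in_setC //; rewrite in_setI !in_setC Hu /= in_set eqxx //.
have [s /andP [Hs1 Hs2]] := IH _ Hk'.
exists (u :: s); rewrite /= cover_cons setUA Hs2 Hs1 !andbT.
apply/negP => H; move: Hu; rewrite (subsetP H) //; rewrite in_set eqxx //.
Qed.

Lemma gds_le s : is_gds e s -> size s <= gamma_gr e.
Proof.
move=> Hs; have Hu : uniq s by case/and3P: Hs.
have Hsz : size s < #|T|.+1 by rewrite ltnS -(card_uniqP Hu) max_card.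
rewrite /gamma_gr.
have HP : [exists t : (Ordinal Hsz).-tuple T, is_gds e t].
  apply/existsP. exists (in_tuple s : (Ordinal Hsz).-tuple T). by [].
exact: (@leq_bigmax_cond _ (fun k : 'I_#|T|.+1 => [exists t : k.-tuple T, is_gds e t])
  (fun k => nat_of_ord k) (Ordinal Hsz) HP).
Qed.

Lemma legal_le s : legal_from e set0 s -> size s <= gamma_gr e.
Proof.
move=> Hs; have [s' /andP [H1 /eqP H2]] := extend (set0 :|: gcover s).
have H : is_gds e (s ++ s').
  have HL : legal_from e set0 (s ++ s') by rewrite legal_cat Hs H1.
  rewrite /is_gds HL (legal_uniq HL) /dominating_seq.
  by rewrite -/(gcover (s ++ s')) cover_cat -H2 set0U eqxx.
by apply: leq_trans (gds_le H); rewrite size_cat leq_addr.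
Qed.

Lemma legal_lt s : legal_from e set0 s -> gcover s != setT -> size s < gamma_gr e.
Proof.
move=> Hs Hc; have [s' /andP [H1 /eqP H2]] := extend (set0 :|: gcover s).
have H : is_gds e (s ++ s').
  have HL : legal_from e set0 (s ++ s') by rewrite legal_cat Hs H1.
  rewrite /is_gds HL (legal_uniq HL) /dominating_seq.
  by rewrite -/(gcover (s ++ s')) cover_cat -H2 set0U eqxx.
apply: leq_trans (gds_le H); rewrite size_cat -addn1 leq_add2l.
case: s' {H1 H} H2 => //; rewrite cover_nil !setU0 set0U => H2.
by rewrite H2 eqxx in Hc.
Qed.

Lemma gamma_attained : 0 < #|T| -> exists s, is_gds e s /\ size s = gamma_gr e.
Proof.
move=> _.
have [s0 /andP [H1 /eqP H2]] := extend set0.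
have Hu : uniq s0 := legal_uniq H1.
have Hsz : size s0 < #|T|.+1 by rewrite ltnS -(card_uniqP Hu) max_card.
pose P := fun k : 'I_#|T|.+1 => [exists t : k.-tuple T, is_gds e t].
have P0 : P (Ordinal Hsz).
  apply/existsP; exists (in_tuple s0).
  by rewrite /is_gds Hu H1 /dominating_seq -/(gcover _) -H2 set0U eqxx.
rewrite /gamma_gr (bigmax_eq_arg _ P0).
case: arg_maxnP => // k /existsP [t Ht] _.
by exists t; rewrite size_tuple.
Qed.

End General.


Definition near (m a b : nat) := (a != b) && (a - b <= m) && (b - a <= m).

Section Lex.
Variables (n m : nat) (T : finType) (e : rel T).
Local Notation V := ('I_n * T)%type.
Local Notation eG := (lexprod (path_pow n m) e).

Lemma path_powE (i j : 'I_n) : path_pow n m i j = near m i j.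
Proof. by []. Qed.

Lemma inNG (i j : 'I_n) h x :
  ((j, x) \in cnbh eG (i, h)) = near m i j || ((i == j) && (x \in cnbh e h)).
Proof.
rewrite !inE /lexprod /= path_powE /near xpair_eqE.
case: (eqVneq i j) => [->|Hij] /=.
  by rewrite eqxx /=; case: (x == h) (e h x) => [] [].
  by rewrite /= ?andbF ?orbF.
Qed.

Lemma inNG' (v w : V) :
  (w \in cnbh eG v) = near m v.1 w.1 || ((v.1 == w.1) && (w.2 \in cnbh e v.2)).
Proof. by case: v w => i h [j x]; rewrite inNG. Qed.

Lemma near_sym a b : near m a b = near m b a.
Proof. by rewrite /near eq_sym; case: (a - b <= m); case: (b - a <= m); rewrite ?andbT ?andbF. Qed.

Section Lower.
Variables (i0 : 'I_n) (x0 : T) (sg : seq T).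
Hypothesis mpos : 0 < m.
Hypothesis sgleg : legal_from e set0 sg.
Hypothesis sgdom : gcover e sg = setT.

Definition ordn (p : nat) : 'I_n := insubd i0 p.
Lemma ordnE p : p < n -> val (ordn p) = p.
Proof. by move=> Hp; rewrite /ordn val_insubd Hp. Qed.

Definition segl (p : nat) : {set V} := [set v : V | v.1 < p].

Definition blk p : seq V := [seq (ordn p, h) | h <- sg].

Fixpoint blks q c : seq V := if c is c'.+1 then blk q ++ blks (q + m + 1) c' else [::].
Fixpoint Es t c : seq V := if c is c'.+1 then (ordn t, x0) :: Es t.+1 c' else [::].

Lemma sg_nil : sg != [::].
Proof.
apply/eqP => H; move: sgdom; rewrite H cover_nil => /setP /(_ x0).
by rewrite in_set0 in_setT.
Qed.

Lemma legal_blk_gen p (C : {set V}) (D : {set T}) s :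
  (forall x, (ordn p, x) \in C -> x \in D) -> legal_from e D s ->
  legal_from eG C [seq (ordn p, h) | h <- s].
Proof.
elim: s C D => [|h s IH] C D //= HC /andP [H1 H2]; apply/andP; split.
  move: H1; apply: contra => /subsetP H; apply/subsetP => x Hx.
  by apply: HC; apply: H; rewrite inNG eqxx Hx orbT.
apply: (IH _ (D :|: cnbh e h)) => // x /setUP [Hx|].
  by rewrite in_setU (HC _ Hx).
rewrite inNG eqxx /= /near eqxx /= => Hx; by rewrite in_setU Hx orbT.
Qed.

Lemma legal_blk p : p < n -> legal_from eG (segl p) (blk p).
Proof.
move=> Hp; apply: (legal_blk_gen (D := set0)) => // x; rewrite inE /=.
by rewrite ordnE // ltnn.
Qed.

Lemma cover_blk p : p < n ->
  segl p :|: gcover eG (blk p) = segl (p + m + 1).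
Proof.
move=> Hp; apply/setP => [[j x]]; rewrite in_setU !inE /=.
apply/idP/idP.
  case/orP => [|/coverP [v /mapP [h _ ->] Hv]]; first by lia.
  by move: Hv; rewrite inNG => /orP [|/andP [/eqP <- _]]; rewrite /near ?ordnE //; lia.
move=> Hj; case: (ltnP j p) => //= Hjp; apply/coverP.
have [h Hh] : exists h, h \in sg by case: sg sg_nil => // a l _; exists a; exact: mem_head.
case: (eqVneq (val j) p) => [Ejp|Njp].
  have : x \in gcover e sg by rewrite sgdom in_setT.
  case/coverP => h' Hh' Hx; exists (ordn p, h'); first by apply/mapP; exists h'.
  rewrite inNG; apply/orP; right; rewrite Hx andbT; apply/eqP/val_inj.
  by rewrite ordnE.
exists (ordn p, h); first by apply/mapP; exists h.
rewrite inNG /near ordnE //; apply/orP; left; rewrite eq_sym Njp /=; lia.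
Qed.

Lemma blks_ok c q : q + c * (m + 1) <= n + m ->
  legal_from eG (segl q) (blks q c) &&
  (segl q :|: gcover eG (blks q c) == segl (q + c * (m + 1))).
Proof.
elim: c q => [|c IH] q Hq /=; first by rewrite cover_nil setU0 mul0n addn0 eqxx.
have Hqn : q < n by lia.
have := IH (q + m + 1); rewrite legal_cat (legal_blk Hqn) cover_cat setUA cover_blk //.
have -> : q + m + 1 + c * (m + 1) = q + c.+1 * (m + 1) by lia.
by apply; lia.
Qed.

Lemma Es_ok c q : m < q -> q + c <= n ->
  legal_from eG (segl q) (Es (q - m) c) &&
  (segl q :|: gcover eG (Es (q - m) c) == segl (q + c)).
Proof.
elim: c q => [|c IH] q Hmq Hq /=; first by rewrite cover_nil setU0 addn0 eqxx.
have Hqn : q < n by lia.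
have Htn : q - m < n by lia.
have HS : (q - m).+1 = q.+1 - m by lia.
have Hu : segl q :|: cnbh eG (ordn (q - m), x0) = segl q.+1.
  apply/setP => [[j x]]; rewrite in_setU inNG !inE /= ordnE // /near.
  apply/idP/idP; first by case/orP => [|/orP [|/andP [/eqP <- _]]]; rewrite ?ordnE //; lia.
  move=> Hj; case: (ltnP j q) => //= Hjq; apply/orP; left; lia.
rewrite cover_cons setUA Hu HS.
have /andP [L1 /eqP L2] : legal_from eG (segl q.+1) (Es (q.+1 - m) c) && (segl q.+1 :|: gcover eG (Es (q.+1 - m) c) == segl (q.+1 + c)) by apply: IH; lia.
rewrite L1 L2 addSnnS eqxx !andbT; apply/negP => /subsetP /(_ (ordn q, x0)).
rewrite inNG ordnE // /near !inE /= ordnE // ltnn => H.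
suff : false by []. by apply: H; apply/orP; left; lia.
Qed.

Definition seqk k := blk 0 ++ Es 1 (n - 1 - (k - 1) * (m + 1)) ++ blks (n - (k - 1) * (m + 1) + m) (k - 1).

Lemma seqk_gds k : 2 <= k -> (k - 1) * (m + 1) <= n - 1 ->
  is_gds eG (seqk k) /\ size (seqk k) = k * size sg + (n - 1 - (k - 1) * (m + 1)).
Proof.
move=> Hk Hkn.
have Hk1 : 1 * (m + 1) <= (k - 1) * (m + 1) by apply: leq_mul => //; lia.
have Hn : m + 1 < n by lia.
have Hn0 : 0 < n by lia.
set c := n - 1 - (k - 1) * (m + 1).
have H0 : segl 0 = set0 by apply/setP => v; rewrite !inE.
have H1 := cover_blk (p := 0) Hn0.
have HE := Es_ok (c := c) (q := m + 1) (ltac:(lia) : m < m + 1).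
rewrite (_ : m + 1 - m = 1) in HE; last by lia.
have HB := blks_ok (c := k - 1) (q := m + 1 + c).
rewrite (_ : m + 1 + c = n - (k - 1) * (m + 1) + m) in HB; last by rewrite /c; lia.
have HEp : m + 1 + c <= n by rewrite /c; lia.
have /andP [HE1 /eqP HE2] := HE HEp.
have HBp : n - (k - 1) * (m + 1) + m + (k - 1) * (m + 1) <= n + m by lia.
have /andP [HB1 /eqP HB2] := HB HBp.
have HL : legal_from eG set0 (seqk k).
  rewrite /seqk -H0 legal_cat (legal_blk Hn0) H1 add0n legal_cat HE1 -/c HE2.
  have -> : m + 1 + c = n - (k - 1) * (m + 1) + m by rewrite /c; lia.
  by rewrite HB1.
have HC : gcover eG (seqk k) = setT.
  rewrite /seqk !cover_cat.
  have -> : gcover eG (blk 0) = segl 0 :|: gcover eG (blk 0) by rewrite H0 set0U.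
  rewrite H1 add0n setUA -/c HE2.
  have -> : m + 1 + c = n - (k - 1) * (m + 1) + m by rewrite /c; lia.
  rewrite HB2; apply/setP => v; rewrite !inE; apply/idP; apply: leq_trans (ltn_ord v.1) _; lia.
split; first by rewrite /is_gds HL (legal_uniq HL) /dominating_seq -/(gcover _ _) HC eqxx.
rewrite /seqk !size_cat size_map.
have SE : forall t c', size (Es t c') = c' by move=> t c'; elim: c' t => //= c' IH t; rewrite IH.
have SB : forall q c', size (blks q c') = c' * size sg.
  by move=> q c'; elim: c' q => //= c' IH q; rewrite size_cat IH size_map mulSn.
rewrite SE SB; have -> : k = (k - 1).+1 by lia.
rewrite mulSn; lia.
Qed.

End Lower.
End Lex.


Section Upper.
Variables (n m : nat) (T : finType) (e : rel T).
Local Notation V := ('I_n * T)%type.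
Local Notation eG := (lexprod (path_pow n m) e).
Variables (z : V) (x0 : T).
Variable s : seq V.
Hypothesis legs : legal_from eG set0 s.
Hypothesis doms : gcover eG s = setT.

Local Notation v t := (nth z s t).
Definition pre t := gcover eG (take t s).

Lemma preP w t :
  reflect (exists t', [/\ t' < t, t' < size s & w \in cnbh eG (v t')]) (w \in pre t).
Proof.
apply: (iffP (coverP _ _ _)).
  case=> u /(nthP z) [i Hi <-] Hw; move: Hi; rewrite size_take_min => Hi.
  have /andP [Hit His] : (i < t) && (i < size s) by rewrite -leq_min.
  by exists i; split => //; rewrite nth_take in Hw.
case=> t' [H1 H2 H3]; exists (v t') => //.
have <- : nth z (take t s) t' = v t' by rewrite nth_take.
by apply: mem_nth; rewrite size_take_min leq_min H1 H2.
Qed.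

Lemma pre_mono t t' : t <= t' -> pre t \subset pre t'.
Proof.
move=> H; apply/subsetP => w /preP [u [H1 H2 H3]]; apply/preP; exists u; split => //; lia.
Qed.

Lemma preS t : t < size s -> pre t.+1 = pre t :|: cnbh eG (v t).
Proof. by move=> H; rewrite /pre (take_nth z H) -cats1 cover_cat cover_cons cover_nil setU0. Qed.

Lemma pre0 : pre 0 = set0.
Proof. by rewrite /pre take0 cover_nil. Qed.

Lemma pre_size : pre (size s) = setT.
Proof. by rewrite /pre take_size. Qed.

Lemma leg_at t : t < size s -> ~~ (cnbh eG (v t) \subset pre t).
Proof.
move=> H; move: legs; rewrite -{1}(cat_take_drop t s) legal_cat (drop_nth z H) /=.
by rewrite set0U => /andP [_ /andP [H1 _]].
Qed.

Definition Ip t := [exists x, (x \in cnbh e (v t).2) && (((v t).1, x) \notin pre t)].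
Definition full (j : 'I_n) t := [forall x, (j, x) \in pre t].
Definition newly j t := ~~ full j t && full j t.+1.

Lemma full_mono j t t' : t <= t' -> full j t -> full j t'.
Proof.
move=> H /forallP F; apply/forallP => x; exact: (subsetP (pre_mono H) _ (F x)).
Qed.

Lemma newly_uniq j t t' : newly j t -> newly j t' -> t = t'.
Proof.
move=> /andP [A1 A2] /andP [B1 B2]; case: (ltngtP t t') => // H.
  by move: B1; rewrite (full_mono H A2).
by move: A1; rewrite (full_mono H B2).
Qed.

Lemma near_full t t' (j : 'I_n) : t' < t -> t' < size s -> near m (v t').1 j -> full j t.
Proof.
move=> H1 H2 H3; apply/forallP => x; apply/preP; exists t'; split => //.
by rewrite inNG' H3.
Qed.

Lemma Ip_nonear t t' : Ip t -> t' < t -> t' < size s -> ~~ near m (v t').1 (v t).1.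
Proof.
move=> /existsP [x /andP [_ Hx]] H1 H2; apply/negP => Hn.
by move: Hx; rewrite (forallP (near_full H1 H2 Hn) x).
Qed.

Lemma Epos t : t < size s -> ~~ Ip t -> exists j, (j != (v t).1) && newly j t.
Proof.
move=> Ht HI; have := leg_at Ht; case/subsetPn => [[j x] Hin Hout].
move: (Hin); rewrite inNG' /= => /orP [Hn|/andP [/eqP Ej Hx]].
  exists j; apply/andP; split.
    by apply/negP => /eqP E; move: Hn; rewrite E /near eqxx.
  apply/andP; split; first by apply/negP => /forallP /(_ x); rewrite (negbTE Hout).
  apply/forallP => y; rewrite preS // in_setU inNG' Hn orbT //.
exfalso; move/negP: HI; apply; apply/existsP; exists x; by rewrite Hx Ej Hout.
Qed.


Definition Aset := [set j : 'I_n | [exists t : 'I_(size s), ~~ Ip t && newly j t]].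
Definition Bset := [set j : 'I_n | [exists t : 'I_(size s), Ip t && ((v t).1 == j) && newly j t]].
Definition Uset := [set j : 'I_n | [exists t : 'I_(size s), Ip t && ((v t).1 != j) && newly j t]].
Definition Kset := [set i : 'I_n | [exists t : 'I_(size s), Ip t && ((v t).1 == i)]].

Lemma ABU_card : #|Aset| + #|Bset| + #|Uset| <= n.
Proof.
have dAB : Aset :&: Bset = set0.
  apply/setP => j; rewrite !inE; apply/negP.
  case/andP => /existsP [t /andP [H1 H2]] /existsP [t' /andP [/andP [H3 _] H4]].
  have E := newly_uniq H2 H4; by rewrite E H3 in H1.
have dAU : Aset :&: Uset = set0.
  apply/setP => j; rewrite !inE; apply/negP.
  case/andP => /existsP [t /andP [H1 H2]] /existsP [t' /andP [/andP [H3 _] H4]].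
  have E := newly_uniq H2 H4; by rewrite E H3 in H1.
have dBU : Bset :&: Uset = set0.
  apply/setP => j; rewrite !inE; apply/negP.
  case/andP => /existsP [t /andP [/andP [_ H1] H2]] /existsP [t' /andP [/andP [_ H3] H4]].
  have E := newly_uniq H2 H4; by rewrite -E (eqP H1) eqxx in H3.
have dABU : (Aset :|: Bset) :&: Uset = set0 by rewrite setIUl dAU dBU setU0.
have C1 := cardsUI Aset Bset; rewrite dAB cards0 addn0 in C1.
have C2 := cardsUI (Aset :|: Bset) Uset; rewrite dABU cards0 addn0 C1 in C2.
rewrite -C2; apply: leq_trans (max_card _) _; by rewrite card_ord.
Qed.

Lemma countE_le : count (predC Ip) (iota 0 (size s)) <= #|Aset|.
Proof.
pose f t := odflt (v t).1 [pick j | newly j t && (j != (v t).1)].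
have Hf : forall t, t < size s -> ~~ Ip t -> newly (f t) t.
  move=> t Ht HI; rewrite /f; case: pickP => [j /andP [H _]|H] //=; exfalso.
  have [j /andP [H1 H2]] := Epos Ht HI; by have := H j; rewrite H1 H2.
set l := filter (predC Ip) (iota 0 (size s)).
have Hl : forall t, t \in l -> (t < size s) && ~~ Ip t.
  by move=> t; rewrite mem_filter mem_iota add0n /= andbC.
have U : uniq (map f l).
  rewrite map_inj_in_uniq ?filter_uniq ?iota_uniq //.
  move=> t t' /Hl /andP [H1 H2] /Hl /andP [H3 H4] E.
  by apply: newly_uniq (Hf _ H1 H2) _; rewrite E; apply: Hf.
rewrite -size_filter -/l -(size_map f) -(card_uniqP U); apply: subset_leq_card.
apply/subsetP => j /mapP [t /Hl /andP [H1 H2] ->]; rewrite inE; apply/existsP.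
by exists (Ordinal H1); rewrite /= H2 Hf.
Qed.

Lemma legal_sub (i : 'I_n) L (D : {set T}) : sorted ltn L ->
  (forall t, t \in L -> [&& t < size s, Ip t & (v t).1 == i]) ->
  (forall t x, t \in L -> x \in D -> (i, x) \in pre t) ->
  legal_from e D [seq (v t).2 | t <- L].
Proof.
elim: L D => [|t L IH] D //= HS HL HD.
have /and3P [Ht HIt /eqP Eit] := HL t (mem_head _ _).
have Hall : all (ltn t) L := order_path_min ltn_trans HS.
apply/andP; split.
  case/existsP: HIt => x /andP [Hx Hxp]; apply/negP => /subsetP /(_ x Hx) HxD.
  by move: Hxp; rewrite Eit HD ?mem_head.
apply: IH; first exact: path_sorted HS.
  by move=> t' Ht'; apply: HL; rewrite in_cons Ht' orbT.
move=> t' x Ht' /setUP [HxD|HxN].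
  have := HD t x (mem_head _ _) HxD; apply/subsetP/pre_mono.
  by apply: ltnW; move/allP: Hall; apply.
apply/preP; exists t; split => //; first by move/allP: Hall; apply.
by rewrite inNG' /= Eit eqxx HxN orbT.
Qed.

Lemma ivt (P : nat -> bool) N : ~~ P 0 -> P N -> exists t, [/\ t < N, ~~ P t & P t.+1].
Proof.
elim: N => [|N IH] H0 HN; first by rewrite HN in H0.
case: (boolP (P N)) => HPN; last by exists N.
by have [t [H1 H2 H3]] := IH H0 HPN; exists t; split => //; apply: ltnW.
Qed.

Lemma full_end j : full j (size s).
Proof. by apply/forallP => x; rewrite pre_size in_setT. Qed.

Lemma nfull0 j : ~~ full j 0.
Proof. by apply/negP => /forallP /(_ x0); rewrite pre0 in_set0. Qed.

Lemma cI_le (i : 'I_n) : count (fun t => Ip t && ((v t).1 == i)) (iota 0 (size s))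
   <= (i \in Kset) * (gamma_gr e - 1) + (i \in Bset).
Proof.
rewrite -size_filter; set L := [seq t <- iota 0 (size s) | Ip t && ((v t).1 == i)].
have HL : forall t, t \in L -> [&& t < size s, Ip t & (v t).1 == i].
  by move=> t; rewrite mem_filter mem_iota add0n /= andbC andbA.
case: (boolP (i \in Kset)) => HK; last first.
  case E: L => [|t L'] //; exfalso; move/negP: HK; apply.
  have Ht0 : t \in L by rewrite E mem_head.
  have /and3P [Ht H1 H2] := HL t Ht0.
  by rewrite inE; apply/existsP; exists (Ordinal Ht); rewrite /= H1 H2.
have Hleg : legal_from e set0 [seq (v t).2 | t <- L].
  apply: (legal_sub (i := i)); last by move=> t x _; rewrite in_set0.
    by apply: sorted_filter; [exact: ltn_trans | exact: iota_ltn_sorted].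
  exact: HL.
rewrite mul1n; case: (boolP (i \in Bset)) => HB.
  have := legal_le Hleg; rewrite size_map; lia.
rewrite addn0; suff : size L < gamma_gr e by lia.
rewrite -(size_map (fun t => (v t).2)); apply: legal_lt => //.
have [tau [Htau1 Htau2 Htau3]] := ivt (nfull0 i) (full_end i).
have Hlt : forall t, t \in L -> t < tau.
  move=> t /HL /and3P [Ht HIt /eqP Eit].
  have Hnf : ~~ full i t.
    case/existsP: HIt => x /andP [_ Hx]; apply/negP => /forallP /(_ x).
    by rewrite -Eit (negbTE Hx).
  case: (ltngtP t tau) => // H.
    by move: Hnf; rewrite (full_mono H Htau3).
  exfalso; move/negP: HB; apply; rewrite inE; apply/existsP; exists (Ordinal Ht).
  by rewrite /= HIt Eit eqxx /newly H Htau2 Htau3.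
move: Htau2; rewrite negb_forall => /existsP [x Hx].
apply/negP => /eqP HC; have : x \in gcover e [seq (v t).2 | t <- L] by rewrite HC in_setT.
case/coverP => h /mapP [t Ht ->] Hxh; move/negP: Hx; apply.
have /and3P [Hts _ /eqP Eit] := HL t Ht.
apply/preP; exists t; split => //; first exact: Hlt.
by rewrite inNG' /= Eit eqxx Hxh orbT.
Qed.

Lemma sum_layers l : \sum_(i < n) count (fun t => Ip t && ((v t).1 == i)) l = count Ip l.
Proof.
elim: l => [|t l IH] /=; first by rewrite big1.
rewrite big_split /= IH; congr (_ + _).
case: (Ip t) => /=; last by rewrite big1.
rewrite (bigD1 (v t).1) //= eqxx big1 // => i Hi; by rewrite eq_sym (negbTE Hi).
Qed.

Lemma main_count : size s + #|Uset| <= #|Kset| * (gamma_gr e - 1) + n.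
Proof.
have H1 := count_predC Ip (iota 0 (size s)); rewrite size_iota in H1.
have H2 : count Ip (iota 0 (size s)) <= #|Kset| * (gamma_gr e - 1) + #|Bset|.
  rewrite -sum_layers; apply: (@leq_trans (\sum_(i < n) ((i \in Kset) * (gamma_gr e - 1) + (i \in Bset)))); first by apply: leq_sum => i _; exact: cI_le.
  rewrite big_split /= -sum_nat_const -sum1_card.
  apply: leq_add; apply: eq_leq; rewrite [RHS]big_mkcond /=; apply: eq_bigr => i _; [by case: (i \in Kset); rewrite ?mul1n ?mul0n | by case: (i \in Bset)].
have H3 := countE_le; have H4 := ABU_card; lia.
Qed.

Lemma s_nonempty : 0 < size s.
Proof.
case: s doms => //= H; have := in_setT z; by rewrite -H cover_nil in_set0.
Qed.

Lemma Ip0 : Ip 0.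
Proof.
apply/existsP; exists (v 0).2; rewrite pre0 in_set0 andbT.
by rewrite inE eqxx.
Qed.

Lemma inj_card (S : {set 'I_n}) (F : nat -> nat) c :
  (forall r, r < c -> F r < n) ->
  (forall r r', r < c -> r' < c -> F r = F r' -> r = r') ->
  (forall r (Hr : F r < n), r < c -> Ordinal Hr \in S) -> c <= #|S|.
Proof.
move=> HF Hinj HS.
pose g (r : 'I_c) : 'I_n := Ordinal (HF _ (ltn_ord r)).
have Hg : injective g.
  move=> r r' E; apply: val_inj; apply: Hinj; [exact: ltn_ord | exact: ltn_ord | by move: (congr1 val E)].
have <- : #|g @: [set: 'I_c]| = c by rewrite card_imset // cardsT card_ord.
apply: subset_leq_card; apply/subsetP => j /imsetP [r _ ->]; exact: HS.
Qed.

Lemma near_card (a : 'I_n) : m < n -> m <= #|[set j : 'I_n | near m a j]|.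
Proof.
move=> Hmn; have Ha := ltn_ord a.
case: (leqP m a) => Hma.
  apply: (inj_card (F := fun r => a - 1 - r)).
  - by move=> r Hr; lia.
  - by move=> r r' Hr Hr'; lia.
  - by move=> r Hr Hrc; rewrite inE /near /=; lia.
apply: (inj_card (F := fun r => if r < a then r else r.+1)).
- by move=> r Hr; case: ifP; lia.
- by move=> r r' Hr Hr'; case: ifP; case: ifP; lia.
- move=> r Hr Hrc; rewrite inE /near /=; move: Hr; case: ifP; lia.
Qed.

Lemma K_far (i i' : 'I_n) : i \in Kset -> i' \in Kset -> ~~ near m i i'.
Proof.
rewrite !inE => /existsP [t /andP [H1 /eqP E1]] /existsP [t' /andP [H2 /eqP E2]].
case: (ltngtP t t') => H.
- by have := Ip_nonear H2 H (ltn_ord t); rewrite E1 E2.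
- by have := Ip_nonear H1 H (ltn_ord t'); rewrite E1 E2 near_sym.
- have E : t = t' by apply: val_inj.
  by rewrite -E1 -E2 E /near eqxx.
Qed.

Lemma K_card : #|Kset| <= ceildiv n (m + 1).
Proof.
pose l := map (fun i : 'I_n => val i %/ (m + 1)) (enum Kset).
have U : uniq l.
  rewrite map_inj_in_uniq ?enum_uniq // => i i'; rewrite !mem_enum => Hi Hi' E.
  apply: val_inj; apply/eqP; apply/negP => /negP Hne.
  have Hm0 : 0 < m + 1 by rewrite addn1.
  have Di := divn_eq i (m + 1); have Di' := divn_eq i' (m + 1).
  have Mi := ltn_pmod i Hm0; have Mi' := ltn_pmod i' Hm0.
  rewrite E in Di.
  have := K_far Hi Hi'; rewrite /near Hne /=; lia.
rewrite cardE -(size_map (fun i : 'I_n => val i %/ (m + 1))) -/l.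
rewrite -(size_iota 0 (ceildiv n (m + 1))); apply: uniq_leq_size => // x.
case/mapP => i _ ->; rewrite mem_iota add0n /ceildiv /= addn1 /= ltn_divLR //.
have D := divn_eq (n + m) m.+1; have M := ltn_pmod (n + m) (ltn0Sn m).
have := ltn_ord i; lia.
Qed.

Definition first (i : 'I_n) := find (fun w : V => w.1 == i) s.

Lemma first_props i : i \in Kset ->
  [/\ first i < size s, (v (first i)).1 = i & forall t, t < first i -> (v t).1 != i].
Proof.
rewrite inE => /existsP [t /andP [_ /eqP E]].
have Hh : has (fun w : V => w.1 == i) s.
  by apply/hasP; exists (v t); [exact: mem_nth | rewrite E].
split; first by rewrite -has_find.
  by apply/eqP; exact: (nth_find z Hh).
by move=> t' Ht'; have := before_find z Ht'; move=> /= ->.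
Qed.

Lemma first_le i t : t < size s -> (v t).1 = i -> first i <= t.
Proof.
move=> Ht E; rewrite leqNgt; apply/negP => H.
by have := before_find z H; rewrite /= E eqxx.
Qed.

Lemma noNear i t : i \in Kset -> t < first i -> ~~ near m (v t).1 i.
Proof.
move=> Hi Ht; move: (Hi); rewrite inE => /existsP [t1 /andP [H1 /eqP E1]].
have := first_le (ltn_ord t1) E1 => Hf.
have Hts : t < size s by have := ltn_ord t1; lia.
by have := Ip_nonear H1 (leq_trans Ht Hf) Hts; rewrite E1.
Qed.

Lemma first_Ip i : i \in Kset -> Ip (first i).
Proof.
move=> Hi; have [F1 F2 F3] := first_props Hi.
apply/existsP; exists (v (first i)).2; rewrite inE eqxx /=.
apply/negP => /preP [t' [H1 H2 H3]]; move: H3; rewrite inNG' F2.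
case/orP => [Hn|/andP [/eqP E _]].
  by have := noNear Hi H1; rewrite Hn.
by have := F3 t' H1; rewrite E eqxx.
Qed.

Lemma gap (a b : 'I_n) : a \in Kset -> b \in Kset -> a < b ->
  (forall i, i \in Kset -> ~~ ((a < i) && (i < b))) ->
  m <= #|[set j in Uset | (a < j) && (j < b)]|.
Proof.
move=> Ka Kb Hab Hbet.
have Hab' : a + m < b by have := K_far Ka Kb; rewrite /near; lia.
have [fa1 fa2 fa3] := first_props Ka; have [fb1 fb2 fb3] := first_props Kb.
have Far : forall t, t < first a -> t < first b ->
    ~~ ((a <= (v t).1 + m) && ((v t).1 <= b + m)).
  elim/ltn_ind => t IH Hta Htb; apply/negP => /andP [L1 L2].
  have Hts : t < size s by lia.
  have N1 : ((v t).1 : nat) != (a : nat) by exact: (fa3 t Hta).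
  have N2 : ((v t).1 : nat) != (b : nat) by exact: (fb3 t Htb).
  have N3 := noNear Ka Hta; have N4 := noNear Kb Htb.
  have Hmid : (a + m < (v t).1) && ((v t).1 + m < b) by move: N3 N4; rewrite /near; lia.
  have HnK : (v t).1 \notin Kset.
    apply/negP => HK; have := Hbet _ HK; rewrite /=; move: Hmid; lia.
  have HnI : ~~ Ip t.
    apply/negP => HI; move/negP: HnK; apply; rewrite inE; apply/existsP.
    by exists (Ordinal Hts); rewrite /= HI eqxx.
  move: HnI; rewrite negb_exists => /forallP /(_ (v t).2); rewrite inE eqxx /= negbK.
  case/preP => t' [H1 H2 H3]; move: H3; rewrite inNG' /= => H3.
  have := IH t' H1 (ltn_trans H1 Hta) (ltn_trans H1 Htb); apply/negP; apply/negPn.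
  case/orP: H3 => [|/andP [/eqP E _]]; last by rewrite E L1 L2.
  move: Hmid; rewrite /near; lia.
have Hnot : forall t (j : 'I_n), t <= first a -> t <= first b ->
    a < j -> j < b -> (j, x0) \notin pre t.
  move=> t j Hta Htb J1 J2; apply/negP => /preP [t' [H1 H2 H3]].
  have := Far t' (leq_trans H1 Hta) (leq_trans H1 Htb); apply/negP; apply/negPn.
  move: H3; rewrite inNG' /= => /orP [|/andP [/eqP E _]]; last by rewrite E; lia.
  rewrite /near; lia.
case: (ltngtP (first a) (first b)) => Hf; last first.
- by move: fa2 fb2 Hab; rewrite Hf => -> ->; rewrite ltnn.
- apply: (inj_card (F := fun r => b - m + r)).
  + by move=> r Hr; have := ltn_ord b; lia.
  + by move=> r r' _ _; lia.
  move=> r Hr Hrm; rewrite !inE /=; apply/andP; split; last by lia.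
  apply/existsP; exists (Ordinal fb1); rewrite /= first_Ip // fb2 /=.
  apply/andP; split; first by rewrite -val_eqE /=; lia.
  apply/andP; split.
    apply/negP => /forallP /(_ x0); apply/negP; apply: Hnot => //=; lia.
  by apply: (near_full (ltnSn _) fb1); rewrite fb2 /near /=; lia.
- apply: (inj_card (F := fun r => a + 1 + r)).
  + by move=> r Hr; have := ltn_ord b; lia.
  + by move=> r r' _ _; lia.
  move=> r Hr Hrm; rewrite !inE /=; apply/andP; split; last by lia.
  apply/existsP; exists (Ordinal fa1); rewrite /= first_Ip // fa2 /=.
  apply/andP; split; first by rewrite -val_eqE /=; lia.
  apply/andP; split.
    apply/negP => /forallP /(_ x0); apply/negP; apply: Hnot => //=; lia.
  by apply: (near_full (ltnSn _) fa1); rewrite fa2 /near /=; lia.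
Qed.

Lemma Usum_gen N (b : 'I_n) : val b = N -> b \in Kset ->
  m * #|[set i in Kset | i < b]| <= #|[set j in Uset | j < b]|.
Proof.
elim/ltn_ind: N b => N IH b Eb Kb.
case: (set_0Vmem [set i in Kset | i < b]) => [->|[a0 Ha0]]; first by rewrite cards0 muln0.
case: (@arg_maxnP _ a0 (fun i => i \in [set i in Kset | i < b]) (fun i : 'I_n => val i) Ha0)
  => a Ha Hmax.
move: (Ha); rewrite inE => /andP [Ka Hab].
have IHa := IH a (ltac:(rewrite -Eb; exact: Hab)) a (erefl _) Ka.
have ES : [set i in Kset | i < b] = a |: [set i in Kset | i < a].
  apply/setP => i; apply/idP/idP.
    move=> Hi; have /= Hia := Hmax i Hi; case/setIdP: Hi => Hi1 Hi2.
    apply/setU1P; case: (ltngtP i a) => H; [right; exact/setIdP | lia | left; exact: val_inj].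
  case/setU1P => [->//|/setIdP [Hi1 Hia]]; apply/setIdP; split => //.
  by apply: ltn_trans Hia Hab.
have Hna : a \notin [set i in Kset | i < a] by apply/negP => /setIdP [_]; rewrite ltnn.
rewrite ES cardsU1 Hna add1n mulnS.
have Hg := gap Ka Kb Hab.
have Hg' : m <= #|[set j in Uset | (a < j) && (j < b)]|.
  apply: Hg => i Ki; apply/negP => /andP [H1 H2].
  have Hi : i \in [set i in Kset | i < b] by apply/setIdP.
  have /= := Hmax i Hi; lia.
have Dsj : [set j in Uset | j < a] :&: [set j in Uset | (a < j) && (j < b)] = set0.
  apply/setP => j; rewrite !inE; apply/negP; lia.
have C := cardsUI [set j in Uset | j < a] [set j in Uset | (a < j) && (j < b)].
rewrite Dsj cards0 addn0 in C.
have Sub : [set j in Uset | j < a] :|: [set j in Uset | (a < j) && (j < b)]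
    \subset [set j in Uset | j < b].
  apply/subsetP => j; rewrite !inE => /orP [] /andP [-> H] /=; lia.
have := subset_leq_card Sub; rewrite C; lia.
Qed.

Lemma U_bounds : m < n -> m <= #|Uset| /\ m * (#|Kset| - 1) <= #|Uset|.
Proof.
move=> Hmn; have Hs := s_nonempty.
split.
  apply: leq_trans (near_card (v 0).1 Hmn) _; apply: subset_leq_card.
  apply/subsetP => j; rewrite !inE => Hn; apply/existsP; exists (Ordinal Hs) => /=.
  rewrite Ip0 /=; apply/andP; split; first by apply/negP => /eqP E; move: Hn; rewrite E /near eqxx.
  by rewrite /newly nfull0 (near_full (ltnSn 0) Hs Hn).
have K0 : (v 0).1 \in Kset.
  by rewrite inE; apply/existsP; exists (Ordinal Hs); rewrite /= Ip0 eqxx.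
case: (@arg_maxnP _ (v 0).1 (fun i => i \in Kset) (fun i : 'I_n => val i) K0) => b Kb Hmax.
have ES : Kset = b |: [set i in Kset | i < b].
  apply/setP => i; apply/idP/idP.
    move=> Hi; have /= Hib := Hmax i Hi.
    apply/setU1P; case: (ltngtP i b) => H; [right; exact/setIdP | lia | left; exact: val_inj].
  by case/setU1P => [->//|/setIdP []].
have Hnb : b \notin [set i in Kset | i < b] by apply/negP => /setIdP [_]; rewrite ltnn.
have H := Usum_gen (erefl _) Kb.
have H2 : #|[set j in Uset | j < b]| <= #|Uset|.
  by apply: subset_leq_card; apply/subsetP => j; rewrite inE => /andP [].
rewrite {1}ES cardsU1 Hnb add1n subn1 /=; exact: leq_trans H H2.
Qed.

Lemma upper_bound : m < n -> 0 < m ->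
  size s <= (if m + 1 <= gamma_gr e
    then ceildiv n (m + 1) * (gamma_gr e - (m + 1)) + n + m
    else 2 * gamma_gr e + n - m - 2).
Proof.
move=> Hmn Hm.
have Hg : 1 <= gamma_gr e.
  have : legal_from e set0 [:: x0].
    by rewrite /= andbT; apply/subsetPn; exists x0; [rewrite inE eqxx | rewrite in_set0].
  by move/legal_le.
have HC := main_count; have [U1 U2] := U_bounds Hmn; have HK := K_card.
have K0 : 0 < #|Kset|.
  apply/card_gt0P; exists (v 0).1; rewrite inE; apply/existsP; exists (Ordinal s_nonempty).
  by rewrite /= Ip0 eqxx.
set k := #|Kset| in HC U2 HK K0; set g := gamma_gr e in Hg HC *; set c := ceildiv n (m + 1) in HK *.
case: ifP => Hgm.
  have P1 : k * (g - 1) = k * (g - (m + 1)) + k * m by rewrite -mulnDr; congr (_ * _); lia.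
  have P2 : m * (k - 1) = k * m - m by rewrite mulnBr muln1 mulnC.
  have P3 : k * (g - (m + 1)) <= c * (g - (m + 1)) by apply: leq_mul.
  have P4 : m <= k * m by rewrite leq_pmull.
  lia.
case: (leqP k 1) => Hk.
  have Ek : k = 1 by lia.
  move: HC; rewrite Ek mul1n; lia.
have P1 : k * (g - 1) = 2 * (g - 1) + (k - 2) * (g - 1) by rewrite -mulnDl; congr (_ * _); lia.
have P2 : m * (k - 1) = m + (k - 2) * m.
  by rewrite (_ : k - 1 = (k - 2).+1); [rewrite mulnS mulnC | lia].
have P3 : (k - 2) * (g - 1) <= (k - 2) * m by apply: leq_mul => //; lia.
lia.
Qed.

End Upper.


Theorem theorem6 (n m : nat) (T : finType) (e : rel T) :
  0 < n -> 0 < m -> m + 2 <= n ->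
  symmetric e -> irreflexive e -> 0 < #|T| ->
  gamma_gr (lexprod (path_pow n m) e) =
    if m + 1 <= gamma_gr e
    then ceildiv n (m + 1) * (gamma_gr e - (m + 1)) + n + m
    else 2 * gamma_gr e + n - m - 2.
Proof.
move=> Hn Hm Hmn _ _ HT.
have [x0 _] := card_gt0P HT.
pose i0 : 'I_n := Ordinal Hn.
have HV : 0 < #|{: 'I_n * T}| by apply/card_gt0P; exists (i0, x0).
apply/eqP; rewrite eqn_leq; apply/andP; split.
  have [s [Hs Hsz]] := gamma_attained (lexprod (path_pow n m) e) HV.
  rewrite -Hsz; case/and3P: Hs => _ /eqP Hd Hl.
  apply: (upper_bound (i0, x0) x0 Hl Hd) => //; lia.
have [sg [Hsg Hsgz]] := gamma_attained e HT.
case/and3P: Hsg => _ /eqP Hd Hl.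
have Hg : 1 <= gamma_gr e.
  have : legal_from e set0 [:: x0].
    by rewrite /= andbT; apply/subsetPn; exists x0; [rewrite inE eqxx | rewrite in_set0].
  by move/legal_le.
set g := gamma_gr e in Hsgz Hg *.
case: ifP => Hgm.
  set k := ceildiv n (m + 1).
  have Hk1 : k * (m + 1) <= n + m.
    by rewrite /k /ceildiv addn1 /=; apply: leq_trunc_div.
  have Hk2 : 2 <= k by rewrite /k /ceildiv addn1 /= leq_divRL //; lia.
  have [Hgds Hsize] := seqk_gds i0 x0 Hm Hl Hd Hk2 (ltac:(rewrite mulnBl mul1n; lia)).
  have := gds_le Hgds; rewrite Hsize Hsgz.
  have P1 : k * (g - (m + 1)) = k * g - k * (m + 1) by rewrite mulnBr.
  have P2 : (k - 1) * (m + 1) = k * (m + 1) - (m + 1) by rewrite mulnBl mul1n.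
  have P3 : k * (m + 1) <= k * g by apply: leq_mul.
  have P4 : m + 1 <= k * (m + 1) by rewrite leq_pmull //; lia.
  lia.
have [Hgds Hsize] := seqk_gds i0 x0 Hm Hl Hd (leqnn 2) (ltac:(rewrite mul1n; lia)).
have := gds_le Hgds; rewrite Hsize Hsgz mul1n; lia.
Qed.
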